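(* Assume $\langle f\rangle_X=0$, $N/p\in\mathbb N$, and that $\psi$ satisfies (A1) and (A2). Then there exist constants $C_1,C_2$, depending only on $c_\psi,C_\psi,C'_\psi$ and $p$ (in particular independent of $\epsilon$ and $f$), such that \[ |u^{\rm c}-u|_{H^1}\le \epsilon\, C_1\|f\|_{L^2},\qquad |\langle u^{\rm c}\rangle_X|\le \epsilon^2 C_2\|f\|_{L^2}, \] where $u$ is the solution of the atomistic problem, $u^0$ the solution of the homogenized problem, and $u^{\rm c}$ the corrector.
   Context: Let $\epsilon>0$ and $N,p$ be positive integers, with the normalization $N\epsilon=1$. Set $X_i=\epsilon i$ ($i\in\mathbb Z$) and $Y_j=j$ ($j\in\mathbb Z$). $U^N_{\rm per}(\epsilon\mathbb Z)$ is the space of functions $u:\epsilon\mathbb Z\to\mathbb R$ with $u(X_{i+N})=u(X_i)$ for all $i$, and $U^N_\#(\epsilon\mathbb Z)$ is the subspace with $\langle u\rangle_X:=\frac1N\sum_{i=1}^N u(X_i)=0$. For $u,v\in U^N_{\rm per}(\epsilon\mathbb Z)$: $\langle u,v\rangle_X=\frac1N\sum_{i=1}^N u(X_i)v(X_i)$, $Du(X_i)=(u(X_{i+1})-u(X_i))/\epsilon$, $\|u\|_{L^q}=(\frac1N\sum_{i=1}^N|u(X_i)|^q)^{1/q}$, $|u|_{H^1}=\|Du\|_{L^2}$. A two-scale function is $g:\epsilon\mathbb Z\times\mathbb Z\to\mathbb R$ with $g(X_{i+N},Y_j)=g(X_i,Y_j)=g(X_i,Y_{j+p})$; set $D_Xg(X_i,Y_j)=(g(X_{i+1},Y_j)-g(X_i,Y_j))/\epsilon$,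 $D_Yg(X_i,Y_j)=g(X_i,Y_{j+1})-g(X_i,Y_j)$, $\langle g\rangle_Y(X_i)=\frac1p\sum_{j=1}^p g(X_i,Y_j)$, $\|g\|_{L^\infty(N,p)}=\max_{1\le i\le N,1\le j\le p}|g(X_i,Y_j)|$. $\psi$ is a two-scale function satisfying (A1) $0<c_\psi\le\psi(X_i,Y_j)\le C_\psi$ for all $i,j$, and (A2) $\|D_X\psi\|_{L^\infty(N,p)}\le C'_\psi$. Define $\psi^\epsilon(X_i)=\psi(X_i,X_i/\epsilon)$ and the homogenized tensor $\psi^0(X_i)=\langle 1/\psi(X_i,\cdot)\rangle_Y^{-1}$. The cell solution $\chi$ is the two-scale function with $\langle\chi(X_i,\cdot)\rangle_Y=0$ for all $i$ and $-D_Y(\psi D_Y\chi)=D_Y\psi$ at every $(X_i,Y_j)$. $f\in U^N_{\rm per}(\epsilon\mathbb Z)$. The atomistic problem: $u\in U^N_\#(\epsilon\mathbb Z)$ with $\langle\psi^\epsilon Du,Dv\rangle_X=\langle f,v\rangle_X$ for all $v\in U^N_{\rm per}(\epsilon\mathbb Z)$. The homogenized problem: $u^0\in U^N_\#(\epsilon\mathbb Z)$ with $\langle\psi^0Du^0,Dv\rangle_X=\langle f,v\rangle_X$ for all $v\in U^N_{\rm per}(\epsilon\mathbb Z)$. The corrector is $u^{\rm c}(X_i)=u^0(X_i)+\epsilon\,\chi(X_i,X_i/\epsilon)\,Du^0(X_i)$. *)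

(* Defs.v *)
From mathcomp Require Import all_boot all_order all_algebra.
From mathcomp Require Import reals.
Set Implicit Arguments. Unset Strict Implicit. Unset Printing Implicit Defensive.
Import Order.TTheory GRing.Theory Num.Theory.
Local Open Scope ring_scope.

(* Functions on the lattice eps*Z are represented by their values at the
   index i : int, i.e.  u i  stands for u(X_i) with X_i = eps*i.
   Two-scale functions g : int -> int -> R, g i j stands for g(X_i, Y_j),
   Y_j = j. *)

Section Defs.
Context {R : realType}.

Definition eps (N : nat) : R := (N%:R)^-1.

Definition periodic (N : nat) (u : int -> R) : Prop :=
  forall i : int, u (i + N%:Z) = u i.

Definition two_scale (N p : nat) (g : int -> int -> R) : Prop :=
  forall i j : int, g (i + N%:Z) j = g i j /\ g i (j + p%:Z) = g i j.

Definition avgX (N : nat) (u : int -> R) : R :=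
  (N%:R)^-1 * \sum_(1 <= i < N.+1) u (i%:Z).

Definition innerX (N : nat) (u v : int -> R) : R :=
  avgX N (fun i => u i * v i).

Definition D (N : nat) (u : int -> R) : int -> R :=
  fun i => (u (i + 1) - u i) / eps N.

Definition L2norm (N : nat) (u : int -> R) : R :=
  Num.sqrt (avgX N (fun i => u i ^+ 2)).

Definition H1semi (N : nat) (u : int -> R) : R := L2norm N (D N u).

Definition DX (N : nat) (g : int -> int -> R) : int -> int -> R :=
  fun i j => (g (i + 1) j - g i j) / eps N.

Definition DY (g : int -> int -> R) : int -> int -> R :=
  fun i j => g i (j + 1) - g i j.

Definition avgY (p : nat) (h : int -> R) : R :=
  (p%:R)^-1 * \sum_(1 <= j < p.+1) h (j%:Z).

Definition Linf_norm (N p : nat) (g : int -> int -> R) : R :=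
  \big[Num.max/0]_(1 <= i < N.+1) \big[Num.max/0]_(1 <= j < p.+1)
     `|g (i%:Z) (j%:Z)|.

(* psi^eps(X_i) = psi(X_i, X_i/eps) = psi(X_i, Y_i) *)
Definition osc (g : int -> int -> R) : int -> R := fun i => g i i.

Definition psi0 (p : nat) (psi : int -> int -> R) : int -> R :=
  fun i => (avgY p (fun j => (psi i j)^-1))^-1.

Definition A1 (psi : int -> int -> R) (c C : R) : Prop :=
  0 < c /\ forall i j : int, c <= psi i j /\ psi i j <= C.

Definition A2 (N p : nat) (psi : int -> int -> R) (C' : R) : Prop :=
  Linf_norm N p (DX N psi) <= C'.

Definition cell_solution (N p : nat) (psi chi : int -> int -> R) : Prop :=
  two_scale N p chi /\
  (forall i : int, avgY p (chi i) = 0) /\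
  (forall i j : int,
     - DY (fun a b => psi a b * DY chi a b) i j = DY psi i j).

Definition weak_solution (N : nat) (a f u : int -> R) : Prop :=
  periodic N u /\ avgX N u = 0 /\
  forall v : int -> R, periodic N v ->
    innerX N (fun i => a i * D N u i) (D N v) = innerX N f v.

Definition corrector (N : nat) (chi : int -> int -> R) (u0 : int -> R)
  : int -> R :=
  fun i => u0 i + eps N * chi i i * D N u0 i.

End Defs.

(* Main.v *)
Require Import Defs.
From mathcomp Require Import all_boot all_order all_algebra.
From mathcomp Require Import reals.
From mathcomp Require Import ring lra zify.
Import Order.TTheory GRing.Theory Num.Theory.
Local Open Scope ring_scope.

Module Helpers.
Set Implicit Arguments. Unset Strict Implicit. Unset Printing Implicit Defensive.

Section Gen.
Variable R : realType.

Lemma per_nat (n : nat) (h : int -> R) : periodic n h ->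
  forall (m : nat) (i : int), h (i + m%:Z * n%:Z) = h i.
Proof.
move=> Hp; elim=> [|m IH] i; first by rewrite mul0r addr0.
have -> : i + m.+1%:Z * n%:Z = (i + m%:Z * n%:Z) + n%:Z by lia.
by rewrite Hp IH.
Qed.

Lemma per_int (n : nat) (h : int -> R) : periodic n h ->
  forall (m : int) (i : int), h (i + m * n%:Z) = h i.
Proof.
move=> Hp [m|m] i; first exact: per_nat.
rewrite -(per_nat Hp m.+1 (i + Negz m * n%:Z)).
congr h; rewrite NegzE; lia.
Qed.

Lemma per_mod (n : nat) (h : int -> R) : periodic n h -> (0 < n)%N ->
  forall i : int, h i = h (i %% n%:Z)%Z.
Proof.
move=> Hp n0 i; rewrite {1}(divz_eq i n%:Z) addrC.
by rewrite per_int.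
Qed.

Lemma per_rep (n : nat) (h : int -> R) : periodic n h -> (0 < n)%N ->
  forall i : int, exists k : nat, (1 <= k <= n)%N /\ h i = h k%:Z.
Proof.
move=> Hp n0 i; rewrite (per_mod Hp n0).
have h0 : (0 <= (i %% n%:Z)%Z) by apply: modz_ge0; rewrite eqz_nat -lt0n.
have h1 : ((i %% n%:Z)%Z < n%:Z) by apply: ltz_pmod; rewrite ltz_nat.
case E: `|(i %% n%:Z)%Z|%N => [|k].
- exists n; split; first by rewrite n0 leqnn.
  have : (i %% n%:Z)%Z = 0 by rewrite -(gez0_abs h0) E.
  move=> ->; by rewrite -[n%:Z]add0r Hp.
- exists k.+1; split; last by rewrite -E gez0_abs.
  have : (i %% n%:Z)%Z = k.+1%:Z by rewrite -(gez0_abs h0) E.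
  move=> E2; rewrite E2 in h1; apply/andP; split=> //; lia.
Qed.

Lemma shift_sum (n : nat) (h : int -> R) : periodic n h ->
  \sum_(1 <= i < n.+1) h (i%:Z + 1) = \sum_(1 <= i < n.+1) h i%:Z.
Proof.
move=> Hp; case: n Hp => [|n] Hp; first by rewrite !big_geq.
rewrite big_nat_recr //= [RHS]big_nat_recl //=.
have -> : h (n.+1%:Z + 1) = h 1.
  by rewrite -(Hp 1); congr h; lia.
rewrite addrC; congr (_ + _); apply: eq_bigr => i _; congr h; lia.
Qed.

End Gen.


Section Gen2.
Variable R : realType.

Lemma sum_bound_nat (m n : nat) (F : nat -> R) (B : R) :
  (forall i, (m <= i < n)%N -> F i <= B) ->
  \sum_(m <= i < n) F i <= B *+ (n - m).
Proof. by move=> H; rewrite -sumr_const_nat; apply: ler_sum_nat. Qed.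

Lemma avgY_bounds (p : nat) (h : int -> R) (lo hi : R) : (0 < p)%N ->
  (forall j : int, lo <= h j <= hi) -> lo <= avgY p h <= hi.
Proof.
move=> p0 H; rewrite /avgY.
have pp : (0 : R) < p%:R by rewrite ltr0n.
have s1 : \sum_(1 <= j < p.+1) h j%:Z <= hi *+ p.
  have := @sum_bound_nat 1 p.+1 (fun i => h i%:Z) hi; rewrite subSS subn0; apply => i _; by case/andP: (H i).
have s2 : lo *+ p <= \sum_(1 <= j < p.+1) h j%:Z.
  have E : lo *+ p = \sum_(1 <= j < p.+1) lo by rewrite sumr_const_nat subSS subn0.
  rewrite E; by apply: ler_sum_nat => i _; case/andP: (H i).
rewrite -mulr_natr in s1; rewrite -mulr_natr in s2.
apply/andP; split.
- by rewrite ler_pdivlMl // mulrC.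
- by rewrite ler_pdivrMl // mulrC.
Qed.

Lemma avgY_norm (p : nat) (h : int -> R) (B : R) : (0 < p)%N ->
  (forall j : int, `|h j| <= B) -> `|avgY p h| <= B.
Proof.
move=> p0 H; have := @avgY_bounds p h (-B) B p0.
rewrite ler_norml; apply => j; by rewrite -ler_norml.
Qed.

Lemma window_sum (p : nat) (h : int -> R) (l : nat) : periodic p h ->
  \sum_(k < p) h ((l * p + k).+1)%:Z = \sum_(1 <= j < p.+1) h j%:Z.
Proof.
move=> Hp; rewrite big_add1 /= big_mkord.
apply: eq_bigr => k _.
rewrite -(per_nat Hp l k.+1%:Z); congr h; lia.
Qed.

Lemma block_sum (p m : nat) (g : nat -> R) :
  \sum_(1 <= i < (m * p).+1) g i = \sum_(l < m) \sum_(k < p) g (l * p + k).+1.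
Proof.
elim: m => [|m IH]; first by rewrite big_ord0 big_geq.
rewrite big_ord_recr /= -IH (big_cat_nat _ (n := (m * p).+1)) //; last by lia.
congr (_ + _).
rewrite -(add1n (m * p)) big_addn big_add1 /=.
have -> : ((m.+1 * p).+1 - m * p).-1 = p by lia.
rewrite big_mkord.
apply: eq_bigr => k _; congr g; lia.
Qed.

Lemma mulrn_mono (B : R) (a b : nat) : 0 <= B -> (a <= b)%N -> B *+ a <= B *+ b.
Proof.
move=> B0 hab; rewrite -(mulr_natr B a) -(mulr_natr B b).
by apply: ler_wpM2l => //; rewrite ler_nat.
Qed.

Lemma incr_bound (h : int -> R) (B : R) :
  (forall j : int, `|h (j + 1) - h j| <= B) ->
  forall (a : int) (d : nat), `|h (a + d%:Z) - h a| <= B *+ d.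
Proof.
move=> H a; elim=> [|d IH]; first by rewrite addr0 subrr normr0 mulr0n.
have -> : h (a + d.+1%:Z) - h a = (h (a + d%:Z + 1) - h (a + d%:Z)) + (h (a + d%:Z) - h a).
  have -> : a + d.+1%:Z = a + d%:Z + 1 by lia.
  by rewrite addrA subrK.
rewrite mulrS; apply: (le_trans (ler_normD _ _)); exact: lerD.
Qed.

Lemma zero_mean_bound (p : nat) (h : int -> R) (B : R) : (0 < p)%N ->
  periodic p h -> \sum_(1 <= j < p.+1) h j%:Z = 0 ->
  (forall j : int, `|h (j + 1) - h j| <= B) ->
  forall j : int, `|h j| <= B *+ p.
Proof.
move=> p0 Hp Hs Hi j.
have B0 : 0 <= B by apply: le_trans (Hi 0); exact: normr_ge0.
have Hab : forall a b : nat, (a <= p)%N -> (b <= p)%N -> `|h a%:Z - h b%:Z| <= B *+ p.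
  move=> a b ha hb; case: (leqP a b) => hab.
  - rewrite distrC; have := incr_bound Hi a%:Z (b - a).
    have -> : a%:Z + (b - a)%N%:Z = b%:Z by lia.
    move/le_trans; apply; apply: mulrn_mono => //; lia.
  - have := incr_bound Hi b%:Z (a - b).
    have -> : b%:Z + (a - b)%N%:Z = a%:Z by lia.
    move/le_trans; apply; apply: mulrn_mono => //; lia.
have [k [hk ->]] := per_rep Hp p0 j.
have E : h k%:Z *+ p = \sum_(1 <= j < p.+1) (h k%:Z - h j%:Z).
  rewrite sumrB Hs subr0 sumr_const_nat; congr (_ *+ _); lia.
have : `|h k%:Z *+ p| <= (B *+ p) *+ p.
  rewrite E; apply: le_trans (ler_norm_sum _ _ _) _.
  have := @sum_bound_nat 1 p.+1 (fun i => `|h k%:Z - h i%:Z|) (B *+ p); rewrite subSS subn0; apply => i /andP [hi1 hi2]; apply: Hab; lia.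
rewrite -mulr_natr -(mulr_natr (B *+ p)) normrM (ger0_norm (ler0n _ p)).
by rewrite ler_pM2r // ltr0n.
Qed.

End Gen2.


Section Gen3.
Variable R : realType.
Variable N : nat.
Hypothesis N0 : (0 < N)%N.

Lemma sqr_normr (x : R) : `|x| ^+ 2 = x ^+ 2.
Proof. exact: real_normK (num_real x). Qed.

Lemma NR_gt0 : (0 : R) < N%:R.
Proof. by rewrite ltr0n. Qed.

Lemma eps_gt0 : (0 : R) < eps N.
Proof. by rewrite /eps invr_gt0 NR_gt0. Qed.

Lemma epsN : eps N * N%:R = 1 :> R.
Proof. by rewrite /eps mulVf // gt_eqF // NR_gt0. Qed.

Lemma avgX_le (g h : int -> R) :
  (forall i : int, g i <= h i) -> avgX N g <= avgX N h.
Proof.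
move=> H; rewrite /avgX ler_pM2l ?invr_gt0 ?NR_gt0 //.
by apply: ler_sum_nat => i _.
Qed.

Lemma avgXD (g h : int -> R) :
  avgX N (fun i => g i + h i) = avgX N g + avgX N h.
Proof. by rewrite /avgX big_split mulrDr. Qed.

Lemma avgXZ (k : R) (g : int -> R) :
  avgX N (fun i => k * g i) = k * avgX N g.
Proof. by rewrite /avgX -mulr_sumr mulrCA. Qed.

Lemma avgXc (k : R) : avgX N (fun _ => k) = k.
Proof.
rewrite /avgX sumr_const_nat subSS subn0 -(mulr_natr k) mulrCA mulVf ?mulr1 //.
by rewrite gt_eqF // NR_gt0.
Qed.

Lemma avgX_shift (h : int -> R) : periodic N h ->
  avgX N (fun i => h (i + 1)) = avgX N h.
Proof. by move=> Hp; rewrite /avgX shift_sum. Qed.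

Lemma sum_diff0 (h : int -> R) : periodic N h ->
  \sum_(1 <= i < N.+1) (h (i%:Z + 1) - h i%:Z) = 0.
Proof. by move=> Hp; rewrite sumrB shift_sum // subrr. Qed.

Lemma sum_D0 (u : int -> R) : periodic N u ->
  \sum_(1 <= i < N.+1) D N u i%:Z = 0.
Proof. by move=> Hp; rewrite /D -mulr_suml sum_diff0 // mul0r. Qed.

Lemma avgX_norm (g : int -> R) : `|avgX N g| <= avgX N (fun i => `|g i|).
Proof.
rewrite /avgX normrM ger0_norm ?invr_ge0 ?ler0n // ler_pM2l ?invr_gt0 ?NR_gt0 //.
exact: ler_norm_sum.
Qed.

Lemma avgabs_le_L2 (f : int -> R) :
  avgX N (fun i => `|f i|) <= L2norm N f.
Proof.
set a := avgX N _; set s := avgX N (fun i => f i ^+ 2).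
have s0 : 0 <= s.
  rewrite -(avgXc 0); apply: avgX_le => i; exact: sqr_ge0.
have key : forall t : R, 0 < t -> a * (2 * t) <= s + t ^+ 2.
  move=> t t0; rewrite mulrC -avgXZ -(avgXc (t ^+ 2)) -avgXD.
  apply: avgX_le => i.
  have : 0 <= (`|f i| - t) ^+ 2 by exact: sqr_ge0.
  rewrite -[f i ^+ 2]sqr_normr; nra.
rewrite /L2norm -/s; set L := Num.sqrt s.
have L0 : 0 <= L by exact: sqrtr_ge0.
have LL : L ^+ 2 = s by rewrite sqr_sqrtr.
have [Lp|] := ltP 0 L.
- have := key L Lp; rewrite -LL; nra.
- move=> Lle; have L00 : L = 0 by apply/eqP; rewrite eq_le Lle L0.
  have s00 : s = 0 by rewrite -LL L00 expr0n.
  case: (ltP 0 a) => ap; last by rewrite L00.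
  have := key a ap; rewrite s00; nra.
Qed.

Lemma L2_bound (f g : int -> R) (A B : R) : periodic N f ->
  0 <= A -> 0 <= B ->
  (forall i : int, `|g i| <= A + B * `|f (i + 1)|) ->
  L2norm N g <= 2 * (A + B * L2norm N f).
Proof.
move=> Hp A0 B0 H.
set s := avgX N (fun i => f i ^+ 2).
have s0 : 0 <= s.
  rewrite -(avgXc 0); apply: avgX_le => i; exact: sqr_ge0.
set L := L2norm N f.
have L0 : 0 <= L by exact: sqrtr_ge0.
have LL : L ^+ 2 = s by rewrite sqr_sqrtr.
have h1 : avgX N (fun i => g i ^+ 2) <= 2 * A ^+ 2 + 2 * B ^+ 2 * s.
  have hs : s = avgX N (fun i => f (i + 1) ^+ 2).
    by rewrite (avgX_shift (h := fun i => f i ^+ 2)) // => i; rewrite Hp.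
  rewrite hs.
  rewrite -avgXZ -(avgXc (2 * A ^+ 2)) -avgXD.
  apply: avgX_le => i.
  have := H i; have := normr_ge0 (f (i + 1)); have := normr_ge0 (g i).
  rewrite -[g i ^+ 2]sqr_normr -[f (i + 1) ^+ 2]sqr_normr.
  set x := `|g i|; set y := `|f (i + 1)|.
  move=> x0 y0 hxy.
  have h2 : x ^+ 2 <= (A + B * y) ^+ 2.
    have : 0 <= (A + B * y - x) * x by apply: mulr_ge0 => //; rewrite subr_ge0.
    nra.
  have h3 : 0 <= (A - B * y) ^+ 2 by exact: sqr_ge0.
  nra.
rewrite /L2norm -(ger0_norm (x := 2 * (A + B * L))); last by nra.
rewrite -sqrtr_sqr ler_sqrt; last by exact: sqr_ge0.
apply: le_trans h1 _; rewrite -LL.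
have := mulr_ge0 (mulr_ge0 A0 B0) L0; nra.
Qed.

End Gen3.


Section Linf.
Variable R : realType.

Lemma Linf_ge (N p : nat) (g : int -> int -> R) (k l : nat) :
  (1 <= k <= N)%N -> (1 <= l <= p)%N -> `|g k%:Z l%:Z| <= Linf_norm N p g.
Proof.
move=> hk hl; rewrite /Linf_norm.
apply: (@bigmax_sup_seq _ _ _ _ _ k) => //; first by rewrite mem_index_iota; lia.
apply: (@bigmax_sup_seq _ _ _ _ _ l) => //; by rewrite mem_index_iota; lia.
Qed.

Lemma Linf_all (N p : nat) (g : int -> int -> R) : (0 < N)%N -> (0 < p)%N ->
  two_scale N p g -> forall i j : int, `|g i j| <= Linf_norm N p g.
Proof.
move=> N0 p0 Hg i j.
have HN : periodic N (fun a => g a j) by move=> a; case: (Hg a j).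
have [k [hk ->]] := per_rep HN N0 i.
have Hp : periodic p (g k%:Z) by move=> b; case: (Hg k b).
have [l [hl ->]] := per_rep Hp p0 j.
exact: Linf_ge.
Qed.

End Linf.


Section Main.
Variable R : realType.
Variables (p : nat) (c C Cp : R).
Hypothesis p0 : (0 < p)%N.
Hypothesis c0 : 0 < c.
Hypothesis Cp0 : 0 <= Cp.
Variables (N : nat) (psi chi : int -> int -> R) (f u u0 : int -> R).
Hypothesis N0 : (0 < N)%N.
Hypothesis pN : (p %| N)%N.
Hypothesis Hts : two_scale N p psi.
Hypothesis HA1 : forall i j, c <= psi i j /\ psi i j <= C.
Hypothesis HA2 : forall i j, `|DX N psi i j| <= Cp.
Hypothesis Hcell : cell_solution N p psi chi.
Hypothesis Hf : periodic N f.
Hypothesis Hu : weak_solution N (osc psi) f u.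
Hypothesis Hu0 : weak_solution N (psi0 p psi) f u0.

Local Notation e := (eps N).
Local Notation ps0 := (psi0 p psi).

Lemma cC : c <= C.
Proof. by case: (HA1 0 0) => h1 h2; apply: le_trans h2. Qed.

Lemma psi_gt0 i j : 0 < psi i j.
Proof. by case: (HA1 i j) => h _; apply: lt_le_trans h. Qed.

Lemma psiN i j : psi (i + N%:Z) j = psi i j.
Proof. by case: (Hts i j). Qed.

Lemma psip i j : psi i (j + p%:Z) = psi i j.
Proof. by case: (Hts i j). Qed.

Lemma invpsi_bd i j : C^-1 <= (psi i j)^-1 <= c^-1.
Proof.
case: (HA1 i j) => h1 h2; have hp := psi_gt0 i j.
have C0 : 0 < C by apply: lt_le_trans c0 cC.
by rewrite !lef_pV2 ?posrE // h1 h2.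
Qed.

Lemma inv_ps0 i : (ps0 i)^-1 = avgY p (fun j => (psi i j)^-1).
Proof. by rewrite /psi0 invrK. Qed.

Lemma avg_invpsi_bd i : C^-1 <= avgY p (fun j => (psi i j)^-1) <= c^-1.
Proof. by apply: avgY_bounds => // j; exact: invpsi_bd. Qed.

Lemma ps0_bd i : c <= ps0 i /\ ps0 i <= C.
Proof.
have C0 : 0 < C by apply: lt_le_trans c0 cC.
have /andP [h1 h2] := avg_invpsi_bd i.
have a0 : 0 < avgY p (fun j => (psi i j)^-1) by apply: lt_le_trans h1; rewrite invr_gt0.
rewrite /psi0; split.
- by rewrite -[c]invrK lef_pV2 ?posrE ?invr_gt0.
- by rewrite -[C]invrK lef_pV2 ?posrE ?invr_gt0.
Qed.

Lemma ps0_gt0 i : 0 < ps0 i.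
Proof. by case: (ps0_bd i) => h _; apply: lt_le_trans h. Qed.

Lemma ps0N i : ps0 (i + N%:Z) = ps0 i.
Proof. by rewrite /psi0; congr (_^-1); rewrite /avgY; congr (_ * _); apply: eq_bigr => j _; rewrite psiN. Qed.

Lemma dpsi i j : `|psi (i + 1) j - psi i j| <= e * Cp.
Proof.
have := HA2 i j; rewrite /DX normrM normfV (gtr0_norm (eps_gt0 R N0)).
by rewrite ler_pdivrMr ?(eps_gt0 R N0) // mulrC.
Qed.

Lemma dinv (a b : R) : c <= a -> c <= b -> `|a^-1 - b^-1| <= `|b - a| / c ^+ 2.
Proof.
move=> ha hb.
have a0 : 0 < a by apply: lt_le_trans ha. have b0 : 0 < b by apply: lt_le_trans hb.
have -> : a^-1 - b^-1 = (b - a) / (a * b) by field; rewrite !gt_eqF //.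
rewrite normrM normfV (gtr0_norm (mulr_gt0 a0 b0)).
apply: ler_wpM2l; first exact: normr_ge0.
rewrite lef_pV2 ?posrE ?exprn_gt0 ?mulr_gt0 //.
by rewrite expr2; apply: ler_pM => //; apply: ltW.
Qed.

Lemma dinvpsi i j : `|(psi (i + 1) j)^-1 - (psi i j)^-1| <= e * (Cp / c ^+ 2).
Proof.
case: (HA1 (i + 1) j) => h1 _; case: (HA1 i j) => h2 _.
apply: le_trans (dinv h1 h2) _; rewrite distrC mulrA.
apply: ler_wpM2r; last exact: dpsi.
by rewrite invr_ge0 exprn_ge0 // ltW.
Qed.

Lemma avgYB (h1 h2 : int -> R) : avgY p h1 - avgY p h2 = avgY p (fun j => h1 j - h2 j).
Proof. by rewrite /avgY sumrB mulrBr. Qed.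

Lemma dinvps0 i : `|(ps0 (i + 1))^-1 - (ps0 i)^-1| <= e * (Cp / c ^+ 2).
Proof.
rewrite !inv_ps0 avgYB; apply: avgY_norm => // j; exact: dinvpsi.
Qed.

Lemma dps0 i : `|ps0 (i + 1) - ps0 i| <= e * (Cp * C ^+ 2 / c ^+ 2).
Proof.
have a0 := ps0_gt0 (i + 1); have b0 := ps0_gt0 i.
case: (ps0_bd (i + 1)) => _ ha; case: (ps0_bd i) => _ hb.
have -> : ps0 (i + 1) - ps0 i = (ps0 (i + 1) * ps0 i) * ((ps0 i)^-1 - (ps0 (i + 1))^-1).
  move: a0 b0; generalize (ps0 (i + 1)) (ps0 i) => x y x0 y0.
  by field; rewrite !gt_eqF //.
rewrite normrM (gtr0_norm (mulr_gt0 a0 b0)) distrC.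
have h := dinvps0 i.
have hab : ps0 (i + 1) * ps0 i <= C ^+ 2 by rewrite expr2; apply: ler_pM => //; apply: ltW.
have hn := normr_ge0 ((ps0 (i + 1))^-1 - (ps0 i)^-1).
have : e * (Cp * C ^+ 2 / c ^+ 2) = C ^+ 2 * (e * (Cp / c ^+ 2)) by ring.
move=> ->; apply: ler_pM => //; first by apply: mulr_ge0; apply: ltW.
Qed.


Lemma const_step (g : int -> R) : (forall k, g (k + 1) = g k) -> forall k, g k = g 0.
Proof.
move=> H.
have Hn : forall n : nat, g n%:Z = g 0 /\ g (- n%:Z) = g 0.
  elim=> [|n [IH1 IH2]]; first by rewrite oppr0.
  split.
  - by rewrite -IH1 -(H n%:Z); congr g; lia.
  - by rewrite -IH2 -(H (- n.+1%:Z)); congr g; lia.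
case=> n; first by case: (Hn n).
by case: (Hn n.+1) => _ <-; congr g; rewrite NegzE.
Qed.

Lemma avgYZ (k : R) (h : int -> R) : avgY p (fun j => k * h j) = k * avgY p h.
Proof. by rewrite /avgY -mulr_sumr mulrCA. Qed.

Lemma avgY1D (h : int -> R) : avgY p (fun j => 1 + h j) = 1 + avgY p h.
Proof.
rewrite /avgY big_split mulrDr sumr_const_nat subSS subn0.
by rewrite -(mulr_natr 1) mul1r mulVf // pnatr_eq0 -lt0n.
Qed.

Lemma chi_per i j : chi i (j + p%:Z) = chi i j.
Proof. by case: Hcell => [H _]; case: (H i j). Qed.

Lemma chiN i j : chi (i + N%:Z) j = chi i j.
Proof. by case: Hcell => [H _]; case: (H i j). Qed.

Lemma chi_avg i : avgY p (chi i) = 0.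
Proof. by case: Hcell => [_ [H _]]. Qed.

Lemma chi_sum i : \sum_(1 <= j < p.+1) chi i j%:Z = 0.
Proof.
have := chi_avg i; rewrite /avgY => /eqP; rewrite mulf_eq0 invr_eq0 pnatr_eq0.
by case/orP => [/eqP E|/eqP //]; move: p0; rewrite E.
Qed.

Lemma cellD i j : chi i (j + 1) - chi i j = ps0 i / psi i j - 1.
Proof.
case: Hcell => [_ [_ Heq]].
set q := fun b => psi i b * (1 + (chi i (b + 1) - chi i b)).
have Hq : forall b, q (b + 1) = q b.
  move=> b; have := Heq i b; rewrite /DY /q; lra.
have Hq0 := const_step Hq.
have hpos := psi_gt0 i.
have E1 : forall b, 1 + (chi i (b + 1) - chi i b) = q 0 * (psi i b)^-1.
  move=> b; rewrite -(Hq0 b) /q mulrAC mulfV ?mul1r ?gt_eqF //.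
have Eavg : avgY p (fun b => 1 + (chi i (b + 1) - chi i b)) = 1.
  by rewrite avgY1D /avgY (sum_diff0 (fun j => chi_per i j)) mulr0 addr0.
have : q 0 = ps0 i.
  have : avgY p (fun b => q 0 * (psi i b)^-1) = 1.
    by rewrite -Eavg /avgY; congr (_ * _); apply: eq_bigr => b _; rewrite E1.
  rewrite avgYZ -inv_ps0 => H.
  have := ps0_gt0 i => hp.
  move/(congr1 (fun x => x * ps0 i)): H; rewrite mul1r -mulrA mulVf ?mulr1 ?gt_eqF //.
move=> Eq; have := E1 j; rewrite Eq; lra.
Qed.


Definition Kchi := (C / c + 1) *+ p.
Definition Kd := Cp * C ^+ 2 / c ^+ 2 / c + C * (Cp / c ^+ 2).
Definition Kchi' := Kd *+ p.

Lemma ratio_bd i j : `|ps0 i / psi i j - 1| <= C / c + 1.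
Proof.
case: (ps0_bd i) => h1 h2; have /andP [h3 h4] := invpsi_bd i j.
have hp := psi_gt0 i j; have hq := ps0_gt0 i.
have r0 : 0 <= ps0 i / psi i j by apply: divr_ge0; apply: ltW.
have r1 : ps0 i / psi i j <= C / c.
  apply: ler_pM => //; [exact: ltW | by rewrite invr_ge0 ltW].
apply: le_trans (ler_normB _ _) _; rewrite normr1 ger0_norm //; lra.
Qed.

Lemma chi_bd i j : `|chi i j| <= Kchi.
Proof.
apply: (zero_mean_bound p0 (chi_per i) (chi_sum i)) => b.
by rewrite cellD; exact: ratio_bd.
Qed.

Lemma Kchi_ge0 : 0 <= Kchi.
Proof. by apply: le_trans (chi_bd 0 0); exact: normr_ge0. Qed.

Lemma dchi i j : `|chi (i + 1) j - chi i j| <= e * Kchi'.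
Proof.
rewrite /Kchi' mulrnAr.
apply: (zero_mean_bound (h := fun b => chi (i + 1) b - chi i b) p0).
- by move=> b; rewrite /= !chi_per.
- by rewrite sumrB !chi_sum subr0.
move=> b.
have -> : chi (i + 1) (b + 1) - chi i (b + 1) - (chi (i + 1) b - chi i b)
   = (chi (i + 1) (b + 1) - chi (i + 1) b) - (chi i (b + 1) - chi i b) by ring.
rewrite !cellD.
have hp := psi_gt0 (i + 1) b; have hq := psi_gt0 i b.
have -> : ps0 (i + 1) / psi (i + 1) b - 1 - (ps0 i / psi i b - 1)
   = (ps0 (i + 1) - ps0 i) * (psi (i + 1) b)^-1
     + ps0 i * ((psi (i + 1) b)^-1 - (psi i b)^-1) by ring.
apply: le_trans (ler_normD _ _) _.
rewrite /Kd (mulrDr e); apply: lerD.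
- rewrite normrM normfV (gtr0_norm hp).
  have /andP [_ h4] := invpsi_bd (i + 1) b.
  have hn := normr_ge0 (ps0 (i + 1) - ps0 i).
  have hi : 0 <= (psi (i + 1) b)^-1 by rewrite invr_ge0 ltW.
  have -> : e * (Cp * C ^+ 2 / c ^+ 2 / c) = (e * (Cp * C ^+ 2 / c ^+ 2)) * c^-1 by ring.
  by apply: ler_pM => //; exact: dps0.
- rewrite normrM (gtr0_norm (ps0_gt0 i)).
  case: (ps0_bd i) => _ hC.
  rewrite mulrCA; apply: ler_pM; [exact: ltW (ps0_gt0 i) | exact: normr_ge0 | exact: hC | exact: dinvpsi].
Qed.

Lemma Kchi'_ge0 : 0 <= Kchi'.
Proof.
have := dchi 0 0; have := normr_ge0 (chi (0 + 1) 0 - chi 0 0) => h1 h2.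
have e0 := eps_gt0 R N0.
have : 0 <= e * Kchi' by apply: le_trans h2.
by rewrite pmulr_rge0.
Qed.


Lemma sumsq0 (G : int -> R) : \sum_(1 <= i < N.+1) G i%:Z ^+ 2 = 0 ->
  forall k : nat, (1 <= k <= N)%N -> G k%:Z = 0.
Proof.
rewrite big_add1 /= big_mkord => H k hk.
have hk' : (k.-1 < N)%N by lia.
have Hge : forall i : 'I_N, xpredT i -> 0 <= G (i.+1)%:Z ^+ 2 by move=> i _; exact: sqr_ge0.
have Hall := psumr_eq0P Hge H.
have := Hall (Ordinal hk') isT.
rewrite /= prednK; last by lia.
by move=> /eqP; rewrite sqrf_eq0 => /eqP.
Qed.

Lemma D_per (w : int -> R) : periodic N w -> periodic N (D N w).
Proof.
move=> Hw i; rewrite /D Hw -(Hw (i + 1)).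
by congr ((w _ - _) / _); lia.
Qed.

Lemma flux (a w : int -> R) : periodic N a -> weak_solution N a f w ->
  forall k, a (k - 1) * D N w (k - 1) - a k * D N w k = e * f k.
Proof.
move=> Ha [Hw [_ Hweak]].
set sg := fun i => a i * D N w i.
have Hs : periodic N sg by move=> i; rewrite /sg Ha (D_per Hw).
set G := fun k => sg (k - 1) - sg k - e * f k.
have HG : periodic N G.
  move=> i; rewrite /G Hf Hs -(Hs (i - 1)); congr (sg _ - _ - _); lia.
have e0 := eps_gt0 R N0.
have key : forall v, periodic N v -> \sum_(1 <= i < N.+1) G i%:Z * v i%:Z = 0.
  move=> v Hv.
  have := Hweak v Hv; rewrite /innerX /avgX => Eq.
  have Eq2 : \sum_(1 <= i < N.+1) sg i%:Z * (v (i%:Z + 1) - v i%:Z)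
           = e * \sum_(1 <= i < N.+1) f i%:Z * v i%:Z.
    have Ninv : (N%:R : R)^-1 != 0 by rewrite invr_eq0 gt_eqF // NR_gt0.
    move/(mulfI Ninv): Eq => Eq.
    rewrite -Eq mulr_sumr; apply: eq_bigr => i _.
    rewrite /sg /D; move: e0; generalize (eps (R:=R) N) => x x0; field; rewrite !gt_eqF //.
  have Esh : \sum_(1 <= i < N.+1) sg (i%:Z - 1) * v i%:Z
           = \sum_(1 <= i < N.+1) sg i%:Z * v (i%:Z + 1).
    rewrite -(shift_sum (h := fun i => sg (i - 1) * v i)); last first.
      by move=> i; rewrite /= Hv -(Hs (i - 1)); congr (sg _ * _); lia.
    by apply: eq_bigr => i _; rewrite addrK.
  have -> : \sum_(1 <= i < N.+1) G i%:Z * v i%:Z =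
     \sum_(1 <= i < N.+1) sg (i%:Z - 1) * v i%:Z - \sum_(1 <= i < N.+1) sg i%:Z * v i%:Z
     - e * \sum_(1 <= i < N.+1) f i%:Z * v i%:Z.
    rewrite mulr_sumr -!sumrB; apply: eq_bigr => i _; rewrite /G; ring.
  rewrite Esh -Eq2 -sumrB; apply/eqP; rewrite subr_eq0; apply/eqP.
  by apply: eq_bigr => i _; rewrite mulrBr.
have Z : forall k : nat, (1 <= k <= N)%N -> G k%:Z = 0.
  apply: sumsq0; rewrite -[RHS](key G HG); apply: eq_bigr => i _; by rewrite expr2.
move=> k; have [l [hl El]] := per_rep HG N0 k.
have : G k = 0 by rewrite El Z.
rewrite /G /sg; lra.
Qed.


Lemma psi_jN i j : psi i (j + N%:Z) = psi i j.
Proof.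
have [m Em] := dvdnP pN.
have Hp : periodic p (psi i) by move=> b; rewrite psip.
by rewrite Em PoszM per_nat.
Qed.

Lemma osc_per : periodic N (osc psi).
Proof. by move=> i; rewrite /osc psiN psi_jN. Qed.

Lemma ps0_per : periodic N ps0.
Proof. by move=> i; rewrite ps0N. Qed.

Definition sg0 i := ps0 i * D N u0 i.
Definition sg1 i := osc psi i * D N u i.
Definition Fa := avgX N (fun i => `|f i|).

Lemma Fa_ge0 : 0 <= Fa.
Proof. rewrite -(avgXc N0 (0:R)); apply: (avgX_le N0) => i; exact: normr_ge0. Qed.

Lemma FaE : Fa = e * \sum_(1 <= l < N.+1) `|f l%:Z|.
Proof. by []. Qed.

Lemma sg0_per : periodic N sg0.
Proof. by move=> i; rewrite /sg0 ps0N (D_per (proj1 Hu0)). Qed.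

Lemma sg0_step k : sg0 (k + 1) - sg0 k = - (e * f (k + 1)).
Proof. have := flux ps0_per Hu0 (k + 1); rewrite addrK /sg0 => <-; ring. Qed.

Lemma sg1_step k : sg1 (k + 1) - sg1 k = - (e * f (k + 1)).
Proof. have := flux osc_per Hu (k + 1); rewrite addrK /sg1 => <-; ring. Qed.

Definition dl := sg1 0 - sg0 0.

Lemma sg1E k : sg1 k = sg0 k + dl.
Proof.
have H : forall k, sg1 k - sg0 k = sg1 0 - sg0 0.
  apply: (@const_step (fun k => sg1 k - sg0 k)) => b.
  by have := sg0_step b; have := sg1_step b; lra.
by have := H k; rewrite /dl; lra.
Qed.

Lemma sg0_var_aux (a d : nat) :
  `|sg0 (a + d)%N%:Z - sg0 a%:Z| <= e * \sum_(a.+1 <= l < (a + d).+1) `|f l%:Z|.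
Proof.
elim: d => [|d IH]; first by rewrite addn0 subrr normr0 big_geq // mulr0.
rewrite addnS big_nat_recr /=; last by lia.
have -> : sg0 (a + d).+1%:Z - sg0 a%:Z =
   (sg0 ((a + d)%N%:Z + 1) - sg0 (a + d)%N%:Z) + (sg0 (a + d)%N%:Z - sg0 a%:Z).
  by rewrite -[(a + d).+1%:Z]/(Posz (a + d).+1) -addn1 PoszD; ring.
rewrite sg0_step mulrDr.
apply: le_trans (ler_normD _ _) _; rewrite addrC; apply: lerD => //.
rewrite normrN normrM (gtr0_norm (eps_gt0 R N0)) -addn1 PoszD.
by [].
Qed.

Lemma sum_sub_nat (a b : nat) (g : nat -> R) : (forall l, 0 <= g l) ->
  (1 <= a)%N -> (a <= b)%N -> (b <= N.+1)%N ->
  \sum_(a <= l < b) g l <= \sum_(1 <= l < N.+1) g l.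
Proof.
move=> H ha hab hb.
rewrite (big_cat_nat _ (n := a) (m := 1) (p := N.+1)) //=; last by lia.
rewrite (big_cat_nat _ (n := b) (m := a) (p := N.+1)) //=.
have s1 : 0 <= \sum_(1 <= l < a) g l by apply: sumr_ge0.
have s2 : 0 <= \sum_(b <= l < N.+1) g l by apply: sumr_ge0.
lra.
Qed.

Lemma sg0_var (a b : nat) : (a <= N)%N -> (b <= N)%N -> `|sg0 b%:Z - sg0 a%:Z| <= Fa.
Proof.
have e0 := eps_gt0 R N0.
wlog hab : a b / (a <= b)%N.
  move=> W ha hb; case: (leqP a b) => h; first exact: W.
  by rewrite distrC; apply: W => //; exact: ltnW.
move=> ha hb.
have := sg0_var_aux a (b - a); rewrite subnKC // => /le_trans; apply.
rewrite FaE ler_pM2l //; apply: sum_sub_nat; try lia; move=> l; exact: normr_ge0.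
Qed.

Lemma sum_sg0 : \sum_(1 <= j < N.+1) sg0 j%:Z / ps0 j%:Z = 0.
Proof.
rewrite -[RHS](sum_D0 (proj1 Hu0)); apply: eq_bigr => j _.
rewrite /sg0 mulrAC mulfV ?mul1r // gt_eqF //; exact: ps0_gt0.
Qed.

Lemma sg0_bd i : `|sg0 i| <= Fa.
Proof.
have [k [hk ->]] := per_rep sg0_per N0 i.
set W := \sum_(1 <= j < N.+1) (ps0 j%:Z)^-1.
have W0 : 0 < W.
  rewrite /W big_nat_recl; last by lia.
  apply: ltr_pwDl; first by rewrite invr_gt0 ps0_gt0.
  apply: sumr_ge0 => j _; by rewrite invr_ge0 ltW // ps0_gt0.
have E : sg0 k%:Z * W = \sum_(1 <= j < N.+1) (sg0 k%:Z - sg0 j%:Z) / ps0 j%:Z.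
  have := sum_sg0; rewrite /W mulr_sumr => H.
  rewrite -[LHS]subr0 -{2}H -sumrB; apply: eq_bigr => j _; ring.
have : `|sg0 k%:Z| * W <= Fa * W.
  rewrite -(gtr0_norm W0) -normrM E (gtr0_norm W0) /W mulr_sumr.
  apply: le_trans (ler_norm_sum _ _ _) _.
  apply: ler_sum_nat => j hj.
  have hj' : 0 < (ps0 j%:Z)^-1 by rewrite invr_gt0; exact: ps0_gt0.
  rewrite normrM normfV (gtr0_norm (ps0_gt0 _)) (ler_pM2r hj').
  rewrite distrC; apply: sg0_var; lia.
by rewrite ler_pM2r.
Qed.


Lemma sum_widen0 (d q : nat) (g : nat -> R) : (forall l, 0 <= g l) -> (d <= q)%N ->
  \sum_(0 <= t < d) g t <= \sum_(0 <= t < q) g t.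
Proof.
move=> H hdq; rewrite [X in _ <= X](big_cat_nat _ (n := d)) //=.
have : 0 <= \sum_(d <= t < q) g t by apply: sumr_ge0.
lra.
Qed.

Lemma incr_sum (H : int -> R) (A B : R) :
  (forall i, `|H (i + 1) - H i| <= e * (A + B * `|f (i + 1)|)) ->
  forall (a : int) (d : nat),
  `|H (a + d%:Z) - H a| <= \sum_(0 <= t < d) e * (A + B * `|f (a + t%:Z + 1)|).
Proof.
move=> Hi a; elim=> [|d IH]; first by rewrite addr0 subrr normr0 big_geq.
rewrite big_nat_recr //=.
have -> : H (a + d.+1%:Z) - H a = (H (a + d%:Z + 1) - H (a + d%:Z)) + (H (a + d%:Z) - H a).
  have -> : a + d.+1%:Z = a + d%:Z + 1 by lia.
  ring.
apply: le_trans (ler_normD _ _) _; rewrite addrC; exact: lerD.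
Qed.

Lemma block_bound (H : int -> int -> R) (A B : R) : 0 <= A -> 0 <= B ->
  (forall l : nat, \sum_(k < p) H (l * p)%N%:Z ((l * p + k).+1)%:Z = 0) ->
  (forall i j, `|H (i + 1) j - H i j| <= e * (A + B * `|f (i + 1)|)) ->
  `|\sum_(1 <= i < N.+1) H i%:Z i%:Z| <= p%:R * A + p%:R * B * Fa.
Proof.
move=> A0 B0 Hw Hi.
have e0 := eps_gt0 R N0.
set m := (N %/ p)%N.
have Nm : N = (m * p)%N by rewrite divnK.
set T := fun l : nat => \sum_(0 <= t < p) e * (A + B * `|f ((l * p + t).+1)%:Z|).
have Tge : forall l t, 0 <= e * (A + B * `|f ((l * p + t).+1)%:Z|).
  move=> l t; apply: mulr_ge0; [exact: ltW | apply: addr_ge0 => //; apply: mulr_ge0 => //].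
have blk : forall l : nat,
    `|\sum_(k < p) H ((l * p + k).+1)%:Z ((l * p + k).+1)%:Z| <= T l *+ p.
  move=> l.
  have -> : \sum_(k < p) H ((l * p + k).+1)%:Z ((l * p + k).+1)%:Z =
     \sum_(k < p) (H ((l * p + k).+1)%:Z ((l * p + k).+1)%:Z - H (l * p)%N%:Z ((l * p + k).+1)%:Z).
    by rewrite sumrB Hw subr0.
  apply: le_trans (ler_norm_sum _ _ _) _.
  rewrite -[X in _ <= X *+ _]/(T l) -[p in _ *+ p]card_ord -sumr_const.
  apply: ler_sum => k _.
  have := incr_sum (H := fun a => H a ((l * p + k).+1)%:Z) (A := A) (B := B).
  move=> /(_ (fun i => Hi i _) (l * p)%N%:Z k.+1) /=.
  have -> : (l * p)%N%:Z + k.+1%:Z = ((l * p + k).+1)%:Z by lia.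
  move=> /le_trans; apply.
  apply: le_trans (sum_widen0 (q := p) (g := fun t => e * (A + B * `|f ((l * p)%N%:Z + t%:Z + 1)|)) _ _) _.
  - move=> t; have := Tge l t; congr (_ <= _ * (_ + _ * `|f _|)); lia.
  - exact: ltn_ord.
  - rewrite /T; apply: ler_sum_nat => t _; rewrite le_eqVlt; apply/orP; left; apply/eqP.
    congr (_ * (_ + _ * `|f _|)); lia.
have tot : \sum_(l < m) T l = e * (A *+ N) + B * Fa.
  rewrite /T FaE.
  have -> : \sum_(l < m) \sum_(0 <= t < p) e * (A + B * `|f ((l * p + t).+1)%:Z|)
          = \sum_(l < m) \sum_(t < p) (fun i : nat => e * (A + B * `|f i%:Z|)) (l * p + t).+1.
    by apply: eq_bigr => l _; rewrite big_mkord.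
  rewrite -(block_sum p m (fun i : nat => e * (A + B * `|f i%:Z|))) -Nm -mulr_sumr big_split /= sumr_const_nat subSS subn0 -mulr_sumr.
  ring.
have BS := block_sum p m (fun i : nat => H i%:Z i%:Z); rewrite -Nm /= in BS; rewrite BS.
apply: le_trans (ler_norm_sum _ _ _) _.
apply: le_trans; first by apply: ler_sum => l _; exact: blk.
rewrite sumrMnl tot.
have -> : e * (A *+ N) = A by rewrite -(mulr_natr A) mulrCA epsN // mulr1.
have -> : (A + B * Fa) *+ p = p%:R * A + p%:R * B * Fa by rewrite -(mulr_natr (A + B * Fa)); ring.
done.
Qed.


Lemma prod_incr (x : int -> R) (y : int -> int -> R) (X Y ax bx ay : R) :
  0 <= X -> 0 <= Y ->
  (forall i, `|x i| <= X) -> (forall i j, `|y i j| <= Y) ->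
  (forall i, `|x (i + 1) - x i| <= e * (ax + bx * `|f (i + 1)|)) ->
  (forall i j, `|y (i + 1) j - y i j| <= e * ay) ->
  forall i j, `|x (i + 1) * y (i + 1) j - x i * y i j|
     <= e * ((Y * ax + X * ay) + (Y * bx) * `|f (i + 1)|).
Proof.
move=> X0 Y0 Hx Hy Hdx Hdy i j.
have -> : x (i + 1) * y (i + 1) j - x i * y i j
   = (x (i + 1) - x i) * y (i + 1) j + x i * (y (i + 1) j - y i j) by ring.
apply: le_trans (ler_normD _ _) _; rewrite !normrM.
have h1 := Hdx i; have h2 := Hdy i j; have h3 := Hx i; have h4 := Hy (i + 1) j.
have n1 := normr_ge0 (x (i + 1) - x i); have n2 := normr_ge0 (y (i + 1) 0).
have n3 := normr_ge0 (x i); have n4 := normr_ge0 (y (i + 1) j - y i j).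
have n5 := normr_ge0 (y (i + 1) j).
have t1 : `|x (i + 1) - x i| * `|y (i + 1) j| <= e * (ax + bx * `|f (i + 1)|) * Y.
  by apply: ler_pM.
have t2 : `|x i| * `|y (i + 1) j - y i j| <= X * (e * ay).
  by apply: ler_pM.
apply: le_trans (lerD t1 t2) _.
rewrite le_eqVlt; apply/orP; left; apply/eqP; ring.
Qed.

Lemma invps0_bd i : `|(ps0 i)^-1| <= c^-1.
Proof.
have /andP [h1 h2] := avg_invpsi_bd i.
rewrite inv_ps0 ger0_norm //; apply: le_trans h1; rewrite invr_ge0; apply: ltW.
by apply: lt_le_trans c0 cC.
Qed.

Lemma y1_bd i j : `|(ps0 i)^-1 - (psi i j)^-1| <= c^-1.
Proof.
have /andP [h1 h2] := avg_invpsi_bd i; have /andP [h3 h4] := invpsi_bd i j.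
have C0 : 0 < C by apply: lt_le_trans c0 cC.
have : 0 < C^-1 by rewrite invr_gt0.
rewrite inv_ps0; move=> hC; rewrite ler_norml; apply/andP; split; lra.
Qed.

Lemma dy1 i j : `|((ps0 (i + 1))^-1 - (psi (i + 1) j)^-1) - ((ps0 i)^-1 - (psi i j)^-1)|
  <= e * (2 * Cp / c ^+ 2).
Proof.
have -> : ((ps0 (i + 1))^-1 - (psi (i + 1) j)^-1) - ((ps0 i)^-1 - (psi i j)^-1)
  = ((ps0 (i + 1))^-1 - (ps0 i)^-1) - ((psi (i + 1) j)^-1 - (psi i j)^-1) by ring.
apply: le_trans (ler_normB _ _) _.
have := dinvps0 i; have := dinvpsi i j.
have -> : e * (2 * Cp / c ^+ 2) = e * (Cp / c ^+ 2) + e * (Cp / c ^+ 2) by ring.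
move=> h1 h2; exact: lerD.
Qed.

Lemma sg0_incr i : `|sg0 (i + 1) - sg0 i| <= e * (0 + 1 * `|f (i + 1)|).
Proof.
rewrite sg0_step normrN normrM (gtr0_norm (eps_gt0 R N0)) add0r mul1r //.
Qed.

Definition Kdl := C * (p%:R * (2 * Cp / c ^+ 2) + p%:R * c^-1).

Lemma dl_bd : `|dl| <= e * (Kdl * Fa).
Proof.
have e0 := eps_gt0 R N0.
have C0 : 0 < C by apply: lt_le_trans c0 cC.
set H := fun i j => sg0 i * ((ps0 i)^-1 - (psi i j)^-1).
have Hb := @block_bound H (1 * (2 * Cp / c ^+ 2) * Fa) (1 * c^-1).
have A0 : 0 <= 1 * (2 * Cp / c ^+ 2) * Fa.
  rewrite mul1r; apply: mulr_ge0; last exact: Fa_ge0.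
  apply: divr_ge0; [apply: mulr_ge0 => // | apply: exprn_ge0; exact: ltW].
have B0 : 0 <= 1 * c^-1 by rewrite mul1r invr_ge0 ltW.
have := Hb A0 B0.
move=> /(_ _ _) HH.
have Hwin : forall l : nat, \sum_(k < p) H (l * p)%N%:Z ((l * p + k).+1)%:Z = 0.
  move=> l; rewrite /H -mulr_sumr sumrB.
  rewrite (window_sum (h := fun j => (psi (l * p)%N%:Z j)^-1)); last by move=> b; rewrite psip.
  rewrite sumr_const card_ord inv_ps0 /avgY.
  have -> : forall S : R, p%:R^-1 * S *+ p - S = 0.
    move=> S; rewrite -(mulr_natr (p%:R^-1 * S)) mulrAC mulVf ?mul1r ?subrr //.
    by rewrite pnatr_eq0 -lt0n.
  by rewrite mulr0.
have Hinc : forall i j, `|H (i + 1) j - H i j| <= e * (1 * (2 * Cp / c ^+ 2) * Fa + 1 * c^-1 * `|f (i + 1)|).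
  move=> i j; rewrite /H.
  have ic0 : 0 <= c^-1 by rewrite invr_ge0 ltW.
  have := @prod_incr sg0 (fun i j => (ps0 i)^-1 - (psi i j)^-1) Fa (c^-1) 0 1 (2 * Cp / c ^+ 2)
     Fa_ge0 ic0 sg0_bd y1_bd sg0_incr dy1 i j.
  rewrite mulr0 add0r mulrC; congr (_ <= _ * (_ + _)); ring.
have Hs := HH Hwin Hinc.
set S := \sum_(1 <= i < N.+1) H i%:Z i%:Z in Hs.
have W0 : C^-1 *+ N <= \sum_(1 <= i < N.+1) (psi i%:Z i%:Z)^-1.
  have -> : C^-1 *+ N = \sum_(1 <= i < N.+1) C^-1 by rewrite sumr_const_nat subSS subn0.
  apply: ler_sum_nat => i _; by case/andP: (invpsi_bd i%:Z i%:Z).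
have EW : dl * \sum_(1 <= i < N.+1) (psi i%:Z i%:Z)^-1 = S.
  have Z1 := sum_D0 (proj1 Hu).
  have Z2 := sum_sg0.
  have E1 : forall i, D N u i = (sg0 i + dl) / psi i i.
    move=> i; rewrite -sg1E /sg1 /osc mulrC mulrA mulVf ?mul1r // gt_eqF //; exact: psi_gt0.
  have : \sum_(1 <= i < N.+1) (sg0 i%:Z + dl) / psi i%:Z i%:Z = 0.
    by rewrite -[RHS]Z1; apply: eq_bigr => i _; rewrite E1.
  rewrite /S /H mulr_sumr => Z3.
  have E : \sum_(1 <= i < N.+1) dl * (psi i%:Z i%:Z)^-1
     - \sum_(1 <= i < N.+1) sg0 i%:Z * ((ps0 i%:Z)^-1 - (psi i%:Z i%:Z)^-1)
     = \sum_(1 <= i < N.+1) (sg0 i%:Z + dl) / psi i%:Z i%:Z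
     - \sum_(1 <= j < N.+1) sg0 j%:Z / ps0 j%:Z.
    by rewrite -!sumrB; apply: eq_bigr => i _; ring.
  rewrite Z3 Z2 subrr in E.
  by apply/eqP; rewrite -subr_eq0 E.
have hW : 0 < \sum_(1 <= i < N.+1) (psi i%:Z i%:Z)^-1.
  apply: lt_le_trans W0; rewrite pmulrn_rgt0 ?invr_gt0 //; lia.
have : `|dl| * (C^-1 *+ N) <= p%:R * (1 * (2 * Cp / c ^+ 2) * Fa) + p%:R * (1 * c^-1) * Fa.
  apply: le_trans Hs; rewrite -EW normrM (gtr0_norm hW); apply: ler_wpM2l; [exact: normr_ge0 | exact: W0].
have -> : C^-1 *+ N = (e * C)^-1.
  by rewrite invfM /eps invrK -(mulr_natr (C^-1)) mulrC.
rewrite -ler_pdivlMr ?invr_gt0 ?mulr_gt0 // invrK /Kdl => h.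
apply: le_trans h _; rewrite le_eqVlt; apply/orP; left; apply/eqP; ring.
Qed.


Lemma Du0E i : D N u0 i = sg0 i * (ps0 i)^-1.
Proof. by rewrite /sg0 mulrAC mulfV ?mul1r // gt_eqF // ps0_gt0. Qed.

Lemma Du0_bd i : `|D N u0 i| <= Fa * c^-1.
Proof.
rewrite Du0E normrM; apply: ler_pM; [exact: normr_ge0 | exact: normr_ge0 | exact: sg0_bd | exact: invps0_bd].
Qed.

Lemma Du0_incr i : `|D N u0 (i + 1) - D N u0 i| <= e * (Fa * (Cp / c ^+ 2) + c^-1 * `|f (i + 1)|).
Proof.
have ic0 : 0 <= c^-1 by rewrite invr_ge0 ltW.
have := @prod_incr sg0 (fun i j => (ps0 i)^-1) Fa (c^-1) 0 1 (Cp / c ^+ 2)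
     Fa_ge0 ic0 sg0_bd (fun i j => invps0_bd i) sg0_incr (fun i j => dinvps0 i) i 0.
rewrite !Du0E mulr0 add0r mulr1 //.
Qed.

Definition AA2 := Kchi * (Fa * (Cp / c ^+ 2)) + Fa * c^-1 * Kchi'.
Definition BB2 := Kchi * c^-1.

Lemma H2_incr i j : `|D N u0 (i + 1) * chi (i + 1) j - D N u0 i * chi i j|
   <= e * (AA2 + BB2 * `|f (i + 1)|).
Proof.
have X0 : 0 <= Fa * c^-1 by apply: mulr_ge0; [exact: Fa_ge0 | rewrite invr_ge0 ltW].
exact: (@prod_incr (D N u0) chi (Fa * c^-1) Kchi (Fa * (Cp / c ^+ 2)) (c^-1) Kchi'
   X0 Kchi_ge0 Du0_bd chi_bd Du0_incr dchi i j).
Qed.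

Lemma AA2_ge0 : 0 <= AA2.
Proof.
have ic0 : 0 <= c^-1 by rewrite invr_ge0 ltW.
have c2 : 0 <= Cp / c ^+ 2 by apply: divr_ge0 => //; apply: exprn_ge0; exact: ltW.
have k1 := Kchi_ge0; have k2 := Kchi'_ge0; have f0 := Fa_ge0.
by rewrite /AA2; apply: addr_ge0; apply: mulr_ge0 => //; apply: mulr_ge0.
Qed.

Lemma BB2_ge0 : 0 <= BB2.
Proof. by apply: mulr_ge0; [exact: Kchi_ge0 | rewrite invr_ge0 ltW]. Qed.

Lemma Kdl_ge0 : 0 <= Kdl.
Proof.
have C0 : 0 < C by apply: lt_le_trans c0 cC.
rewrite /Kdl; apply: mulr_ge0; first exact: ltW.
have c2 : 0 <= 2 * Cp / c ^+ 2.
  by apply: divr_ge0; [apply: mulr_ge0 => // | apply: exprn_ge0; exact: ltW].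
have ic0 : 0 <= c^-1 by rewrite invr_ge0 ltW.
by apply: addr_ge0; apply: mulr_ge0; rewrite ?ler0n.
Qed.

Lemma Dw_pt i : `|D N (fun i => corrector N chi u0 i - u i) i|
   <= e * (Kdl * Fa * c^-1 + AA2) + e * BB2 * `|f (i + 1)|.
Proof.
have e0 := eps_gt0 R N0.
have hp := psi_gt0 i i.
have E1 : D N (fun i => corrector N chi u0 i - u i) i
   = D N u0 i + chi (i + 1) (i + 1) * D N u0 (i + 1) - chi i i * D N u0 i - D N u i.
  rewrite /corrector /D; move: e0; generalize (eps (R:=R) N) => x x0.
  by field; rewrite gt_eqF.
have E2 : D N u i = (ps0 i * D N u0 i + dl) / psi i i.
  by rewrite -/(sg0 i) -sg1E /sg1 /osc mulrAC mulfV ?mul1r // gt_eqF.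
have E3 : chi i i = chi i (i + 1) - (ps0 i / psi i i - 1).
  by rewrite -cellD; ring.
have E4 : D N (fun i => corrector N chi u0 i - u i) i
   = - (dl / psi i i) + (D N u0 (i + 1) * chi (i + 1) (i + 1) - D N u0 i * chi i (i + 1)).
  rewrite E1 E2 E3; move: hp; generalize (psi i i) => y y0.
  by field; rewrite gt_eqF.
rewrite E4; apply: le_trans (ler_normD _ _) _.
have h2 := H2_incr i (i + 1).
rewrite [X in _ <= X](_ : _ = e * (Kdl * Fa) * c^-1 + e * (AA2 + BB2 * `|f (i + 1)|)); last by ring.
apply: lerD => //.
rewrite normrN normrM normfV (gtr0_norm hp).
apply: ler_pM; [exact: normr_ge0 | by rewrite invr_ge0 ltW | exact: dl_bd |].
by case/andP: (invpsi_bd i i).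
Qed.


Definition KC1 := 2 * (Kdl * c^-1 + Kchi * (Cp / c ^+ 2) + c^-1 * Kchi' + BB2).
Definition KC2 := p%:R * (Kchi * (Cp / c ^+ 2) + c^-1 * Kchi' + BB2).

Lemma final1 : H1semi N (fun i => corrector N chi u0 i - u i) <= e * KC1 * L2norm N f.
Proof.
have e0 := eps_gt0 R N0.
have ic0 : 0 <= c^-1 by rewrite invr_ge0 ltW.
have c2 : 0 <= Cp / c ^+ 2 by apply: divr_ge0 => //; apply: exprn_ge0; exact: ltW.
have k1 := Kchi_ge0; have k2 := Kchi'_ge0; have f0 := Fa_ge0; have k3 := Kdl_ge0.
have b2 := BB2_ge0; have a2 := AA2_ge0.
have FL : Fa <= L2norm N f by exact: avgabs_le_L2.
have A0 : 0 <= e * (Kdl * Fa * c^-1 + AA2).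
  apply: mulr_ge0; first exact: ltW.
  apply: addr_ge0 => //; apply: mulr_ge0 => //; exact: mulr_ge0.
have B0 : 0 <= e * BB2 by apply: mulr_ge0 => //; exact: ltW.
have := L2_bound N0 Hf A0 B0 Dw_pt; rewrite -/(H1semi _ _) => /le_trans; apply.
set K := Kdl * c^-1 + Kchi * (Cp / c ^+ 2) + c^-1 * Kchi'.
have K0 : 0 <= K.
  by rewrite /K; apply: addr_ge0; [apply: addr_ge0|]; apply: mulr_ge0.
have -> : Kdl * Fa * c^-1 + AA2 = Fa * K by rewrite /AA2 /K; ring.
have : Fa * K <= L2norm N f * K by apply: ler_wpM2r.
have L0 : 0 <= L2norm N f by exact: sqrtr_ge0.
rewrite /KC1 -/K => h.
have : e * (Fa * K) <= e * (L2norm N f * K) by apply: ler_wpM2l => //; exact: ltW.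
have -> : e * (2 * (K + BB2)) * L2norm N f = 2 * (e * (L2norm N f * K) + e * BB2 * L2norm N f) by ring.
move: (e * (Fa * K)) (e * (L2norm N f * K)) => a b hab.
lra.
Qed.

Lemma final2 : `|avgX N (corrector N chi u0)| <= e ^+ 2 * KC2 * L2norm N f.
Proof.
have e0 := eps_gt0 R N0.
have ic0 : 0 <= c^-1 by rewrite invr_ge0 ltW.
have c2 : 0 <= Cp / c ^+ 2 by apply: divr_ge0 => //; apply: exprn_ge0; exact: ltW.
have k1 := Kchi_ge0; have k2 := Kchi'_ge0; have f0 := Fa_ge0.
have b2 := BB2_ge0; have a2 := AA2_ge0.
have FL : Fa <= L2norm N f by exact: avgabs_le_L2.
have E : avgX N (corrector N chi u0) = e * (e * \sum_(1 <= i < N.+1) (D N u0 i%:Z * chi i%:Z i%:Z)).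
  have := proj1 (proj2 Hu0); rewrite /avgX => Z.
  rewrite /avgX /corrector big_split /= mulrDr Z add0r.
  rewrite (_ : \sum_(1 <= i < N.+1) e * chi i%:Z i%:Z * D N u0 i%:Z = e * \sum_(1 <= i < N.+1) (D N u0 i%:Z * chi i%:Z i%:Z)); last by rewrite mulr_sumr; apply: eq_bigr => i _; ring.
  by rewrite mulrCA.
have Hwin : forall l : nat, \sum_(k < p) (fun i j => D N u0 i * chi i j) (l * p)%N%:Z ((l * p + k).+1)%:Z = 0.
  move=> l /=; rewrite -mulr_sumr (window_sum (h := chi (l * p)%N%:Z)); last by move=> b; rewrite chi_per.
  by rewrite chi_sum mulr0.
have Hs := block_bound AA2_ge0 BB2_ge0 Hwin H2_incr.
rewrite E !normrM (gtr0_norm e0) mulrA -expr2.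
have e2 : 0 < (eps (R:=R) N) ^+ 2 by apply: exprn_gt0.
rewrite -mulrA ler_pM2l //; apply: le_trans Hs _.
set K := Kchi * (Cp / c ^+ 2) + c^-1 * Kchi'.
have -> : AA2 = Fa * K by rewrite /AA2 /K; ring.
have K0 : 0 <= K by rewrite /K; apply: addr_ge0; apply: mulr_ge0.
have p0R : 0 <= (p%:R : R) by rewrite ler0n.
rewrite /KC2 -/K.
have : p%:R * (Fa * K) + p%:R * BB2 * Fa = p%:R * (K + BB2) * Fa by ring.
move=> ->; apply: ler_wpM2l => //; apply: mulr_ge0 => //; exact: addr_ge0.
Qed.

End Main.

End Helpers.
Import Helpers.

Theorem theorem4p5 (R : realType) (p : nat) (c_psi C_psi C'_psi : R) :
  (0 < p)%N ->
  exists C1 C2 : R,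
  forall (N : nat) (psi chi : int -> int -> R) (f u u0 : int -> R),
    (0 < N)%N -> (p %| N)%N ->
    two_scale N p psi ->
    A1 psi c_psi C_psi ->
    A2 N p psi C'_psi ->
    cell_solution N p psi chi ->
    periodic N f -> avgX N f = 0 ->
    weak_solution N (osc psi) f u ->
    weak_solution N (psi0 p psi) f u0 ->
    H1semi N (fun i => corrector N chi u0 i - u i)
      <= eps N * C1 * L2norm N f /\
    `| avgX N (corrector N chi u0) | <= eps N ^+ 2 * C2 * L2norm N f.
Proof.
move=> p0.
exists (KC1 p c_psi C_psi `|C'_psi|), (KC2 p c_psi C_psi `|C'_psi|).
move=> N psi chi f u u0 N0 pN Hts [c0 HA1] HA2 Hcell Hf _ Hu Hu0.
have Cp0 : 0 <= `|C'_psi| by exact: normr_ge0.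
have HA2' : forall i j, `|DX N psi i j| <= `|C'_psi|.
  move=> i j.
  have Hts' : two_scale N p (DX N psi).
    move=> a b; rewrite /DX; case: (Hts a b) => h1 h2; case: (Hts (a + 1) b) => h3 h4.
    split.
    - by rewrite -h3 h1; congr ((psi _ _ - _) / _); rewrite addrAC.
    - by case: (Hts (a + 1) b) => _ ->; rewrite h2.
  apply: le_trans (Linf_all N0 p0 Hts' i j) _.
  apply: le_trans HA2 _; exact: ler_norm.
split.
- exact: (final1 p0 c0 Cp0 N0 pN Hts HA1 HA2' Hcell Hf Hu Hu0).
- exact: (final2 p0 c0 Cp0 N0 pN Hts HA1 HA2' Hcell Hf Hu0).
Qed.
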